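(* Let $\mathcal F=\{F^c_{t,k}\}$ be an F-system and $R,\lambda$ reals such that $|F^A_t\cup F^B_t|\le Rt+\lambda$ for every positive integer $t$. Then for every positive integer $t$, $|S_t|\ge(2-R)t-\lambda$.
   Context: F-system: a family $\mathcal F=\{F^c_{t,k}\}$ of sets of positive integers, indexed by $c\in\{A,B\}$ and integers $0<k\le t$, such that (F1) $|F^c_{t,k}|\ge k$ for all $c,t,k$; and (F2) $F^A_{t,k}\cap F^B_{t',k'}=\emptyset$ for all $k\le t$, $k'\le t'$ with $k+k'\le\max(t,t')$. Notation: $F^c_t=\bigcup_{0<\kappa\le\tau\le t}F^c_{\tau,\kappa}$ for $c\in\{A,B\}$, and $S_t=F^A_t\cap F^B_t$. *)

(* Defs.v *)
From Stdlib Require Import Reals Arith List.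
Import ListNotations.
Open Scope R_scope.

Inductive color := A | B.

(* |X| <= r : every finite duplicate-free list of elements of X has length <= r
   (so an infinite X never satisfies it). *)
Definition card_le (X : nat -> Prop) (r : R) : Prop :=
  forall l : list nat, NoDup l -> (forall x, In x l -> X x) -> INR (length l) <= r.

(* |X| >= r : X contains r distinct elements (true for infinite X). *)
Definition card_ge (X : nat -> Prop) (r : R) : Prop :=
  exists l : list nat, NoDup l /\ (forall x, In x l -> X x) /\ r <= INR (length l).

(* F c t k is the set F^c_{t,k}; only indices 0 < k <= t are relevant. *)
Definition Fsystem (F : color -> nat -> nat -> nat -> Prop) : Prop :=
  (forall c t k x, (0 < k <= t)%nat -> F c t k x -> (0 < x)%nat) /\
  (forall c t k, (0 < k <= t)%nat -> card_ge (F c t k) (INR k)) /\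
  (forall t k t' k' x, (0 < k <= t)%nat -> (0 < k' <= t')%nat ->
     (k + k' <= Nat.max t t')%nat -> F A t k x -> F B t' k' x -> False).

Definition Fc (F : color -> nat -> nat -> nat -> Prop) (c : color) (t : nat) (x : nat) : Prop :=
  exists tau kappa, (0 < kappa <= tau)%nat /\ (tau <= t)%nat /\ F c tau kappa x.

Definition St (F : color -> nat -> nat -> nat -> Prop) (t : nat) (x : nat) : Prop :=
  Fc F A t x /\ Fc F B t x.

(* Main.v *)
Require Import Defs.
From Stdlib Require Import Reals Arith List Lra Lia.
Open Scope R_scope.

Theorem lemma2 (F : color -> nat -> nat -> nat -> Prop) (Rr lam : R) :
  Fsystem F ->
  (forall t : nat, (0 < t)%nat ->
     card_le (fun x => Fc F A t x \/ Fc F B t x) (Rr * INR t + lam)) ->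
  forall t : nat, (0 < t)%nat ->
    card_ge (St F t) ((2 - Rr) * INR t - lam).
Proof.
  intros [_ [HF _]] Hc t Ht.
  assert (Htt : (0 < t <= t)%nat) by lia.
  destruct (HF A t t Htt) as [lA [NA [IA LA]]].
  destruct (HF B t t Htt) as [lB [NB [IB LB]]].
  set (f := fun x => if in_dec Nat.eq_dec x lA then true else false).
  exists (filter f lB). split; [|split].
  - apply NoDup_filter; auto.
  - intros x Hx. apply filter_In in Hx as [H1 H2]. unfold f in H2.
    destruct (in_dec Nat.eq_dec x lA) as [H3|]; [|discriminate].
    split; exists t, t; repeat split; try lia; auto.
  - assert (HU := Hc t Ht (lA ++ filter (fun x => negb (f x)) lB)).
    assert (HL := filter_length f lB).
    rewrite app_length in HU.
    assert (Hle : INR (length lA + length (filter (fun x => negb (f x)) lB)) <= Rr * INR t + lam).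
    { apply HU.
      - apply NoDup_app; auto. apply NoDup_filter; auto.
        intros a Ha Hb. apply filter_In in Hb as [_ Hb]. unfold f in Hb.
        destruct (in_dec Nat.eq_dec a lA); [discriminate|contradiction].
      - intros x Hx. apply in_app_or in Hx as [Hx|Hx].
        + left. exists t, t. repeat split; try lia; auto.
        + apply filter_In in Hx as [Hx _]. right. exists t, t. repeat split; try lia; auto. }
    rewrite plus_INR in Hle.
    assert (E : INR (length lB) = INR (length (filter f lB)) + INR (length (filter (fun x => negb (f x)) lB))).
    { rewrite <- plus_INR. f_equal. lia. }
    lra.
Qed.
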